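(* Let $n\ge 1$ and let $H^{2n+2}$ be the Lie group of real matrices $$M=\begin{pmatrix} I_n & P & Q & 0\\ 0 & 1 & r & 0\\ 0&0&1&0\\ 0&0&0&e^{2\pi i s}\end{pmatrix},$$ where $P=(p_i)$, $Q=(q_i)$ are real $n\times 1$ matrices and $r,s\in\mathbb R$. Let $\Gamma\subset H^{2n+2}$ be the subgroup of matrices with integer entries and $W^{2n+2}=H^{2n+2}/\Gamma$. Let $g=\sum_{i=1}^{2n+2}\alpha_i\otimes\alpha_i$ be the left-invariant Riemannian metric on $H^{2n+2}$ (and the induced metric on $W^{2n+2}$). Let $J$ be an almost complex structure on $W^{2n+2}$ induced by a left-invariant almost complex structure on $H^{2n+2}$ that is compatible with $g$, i.e. $g(JX,JY)=g(X,Y)$. If the almost Hermitian structure $(g,J)$ is symplectic, i.e. its Kähler form $F(X,Y)=g(JX,Y)$ is closed, then $J$ has holomorphic type $1$.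
   Context: Global coordinates on $H^{2n+2}$: $x_i(M)=p_i$, $x_{n+1}(M)=r$, $x_{n+1+i}(M)=q_i$ ($1\le i\le n$), $x_{2n+2}(M)=s$. Left-invariant 1-forms: $\alpha_i=dx_i$ ($1\le i\le n+1$), $\alpha_{n+1+i}=dx_{n+1+i}-x_i\,dx_{n+1}$ ($1\le i\le n$), $\alpha_{2n+2}=dx_{2n+2}$. A smooth complex-valued function $f$ on an almost complex manifold $(M,J)$ is holomorphic if $df$ is a $(1,0)$-form with respect to $J$, i.e. $df(JX)=i\,df(X)$ for all tangent vectors $X$. For $x\in M$, $m(x)$ denotes the maximal number of holomorphic functions defined on a neighborhood of $x$ whose differentials are linearly independent at $x$. $J$ has holomorphic type $m$ if $m(x)=m$ for every $x\in M$. *)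

(* Defs.v *)
From Stdlib Require Import Reals Lra Lia Arith List.
Open Scope R_scope.

(* Points of H^{2n+2} are identified, via the global coordinates of the paper,
   with R^{2n+2}.  We use 0-based indices: paper coordinate x_i corresponds to
   index i-1.  Thus  p_i ~ index i-1 (i=1..n),  r ~ index n,
   q_i ~ index n+i (i=1..n),  s ~ index 2n+1.
   A point is a map nat -> R; only indices < 2n+2 are relevant. *)
Definition Point := nat -> R.

Definition dimH (n : nat) : nat := (2 * n + 2)%nat.

Fixpoint sumR (N : nat) (F : nat -> R) : R :=
  match N with
  | O => 0
  | S m => sumR m F + F m
  end.

Definition ecoord (k : nat) : Point := fun i => if Nat.eqb i k then 1 else 0.
Definition shift (y : Point) (k : nat) (t : R) : Point :=
  fun i => if Nat.eqb i k then y i + t else y i.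

(* Left-invariant coframe (0-based):
   alpha_j = dx_j  for j <= n and j = 2n+1,
   alpha_{n+i} = dx_{n+i} - x_{i-1} dx_n   for i = 1..n.
   alpha n j y X = value of alpha_j at the point y on the vector X. *)
Definition in_q (n j : nat) : bool := (Nat.leb (n + 1) j && Nat.ltb j (2 * n + 1))%bool.

Definition alpha (n j : nat) (y : Point) (X : Point) : R :=
  if in_q n j then X j - y (j - n - 1)%nat * X n else X j.

(* Dual left-invariant frame: E_j = d/dx_j, except
   E_n = d/dx_n + sum_{i=1..n} x_{i-1} d/dx_{n+i}. *)
Definition Evec (n j : nat) (y : Point) : Point :=
  fun k => if Nat.eqb k j then 1
           else if (Nat.eqb j n && in_q n k)%bool then y (k - n - 1)%nat else 0.

Definition gmet (n : nat) (y : Point) (X Y : Point) : R :=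
  sumR (dimH n) (fun j => alpha n j y X * alpha n j y Y).

(* A left-invariant (1,1)-tensor J is given by a constant matrix Jm in the
   left-invariant frame:  J E_l = sum_j Jm j l E_j.  Japply gives J_y X in
   coordinates. *)
Definition Japply (n : nat) (Jm : nat -> nat -> R) (y : Point) (X : Point) : Point :=
  fun k => sumR (dimH n)
             (fun j => sumR (dimH n) (fun l => Jm j l * alpha n l y X) * Evec n j y k).

Definition almost_complex (n : nat) (Jm : nat -> nat -> R) : Prop :=
  forall (y X : Point) (k : nat), (k < dimH n)%nat ->
    Japply n Jm y (Japply n Jm y X) k = - X k.

Definition compatible (n : nat) (Jm : nat -> nat -> R) : Prop :=
  forall (y X Y : Point),
    gmet n y (Japply n Jm y X) (Japply n Jm y Y) = gmet n y X Y.

Definition Fcoord (n : nat) (Jm : nat -> nat -> R) (y : Point) (a b : nat) : R :=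
  gmet n y (Japply n Jm y (ecoord a)) (ecoord b).

(* dF = 0:  (dF)(d_a,d_b,d_c) = d_a F_bc + d_b F_ca + d_c F_ab = 0 *)
Definition symplectic (n : nat) (Jm : nat -> nat -> R) : Prop :=
  forall (y : Point) (a b c : nat),
    (a < dimH n)%nat -> (b < dimH n)%nat -> (c < dimH n)%nat ->
    exists L1 L2 L3 : R,
      derivable_pt_lim (fun t => Fcoord n Jm (shift y a t) b c) 0 L1 /\
      derivable_pt_lim (fun t => Fcoord n Jm (shift y b t) c a) 0 L2 /\
      derivable_pt_lim (fun t => Fcoord n Jm (shift y c t) a b) 0 L3 /\
      L1 + L2 + L3 = 0.

Definition ball (N : nat) (x : Point) (eps : R) (y : Point) : Prop :=
  forall k, (k < N)%nat -> Rabs (y k - x k) < eps.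

(* f is smooth (C^infinity) on U, with D l = iterated partial derivative
   d_{l_1} d_{l_2} ... d_{l_m} f (D nil = f): all iterated partials exist
   and are continuous on U. *)
Definition smooth_on (N : nat) (U : Point -> Prop) (f : Point -> R)
  (D : list nat -> Point -> R) : Prop :=
  (forall y, U y -> D nil y = f y) /\
  (forall (l : list nat) (y : Point) (k : nat), U y -> (k < N)%nat ->
     derivable_pt_lim (fun t => D l (shift y k t)) 0 (D (k :: l) y)) /\
  (forall (l : list nat) (y : Point), U y ->
     forall eps, eps > 0 -> exists delta, delta > 0 /\
       forall z, U z -> ball N y delta z -> Rabs (D l z - D l y) < eps).

Definition dif (N : nat) (D : list nat -> Point -> R) (y X : Point) : R :=
  sumR N (fun k => X k * D (k :: nil) y).

(* f = u + i v is holomorphic on U: df(JX) = i df(X) for every tangent X,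
   i.e. du(JX) = - dv(X) and dv(JX) = du(X). *)
Definition holomorphic_on (n : nat) (Jm : nat -> nat -> R) (U : Point -> Prop)
  (u v : Point -> R) (Du Dv : list nat -> Point -> R) : Prop :=
  smooth_on (dimH n) U u Du /\ smooth_on (dimH n) U v Dv /\
  forall y X, U y ->
    dif (dimH n) Du y (Japply n Jm y X) = - dif (dimH n) Dv y X /\
    dif (dimH n) Dv y (Japply n Jm y X) = dif (dimH n) Du y X.

(* There exist m holomorphic functions f_l = u_l + i v_l (l < m) on a
   neighbourhood of x whose differentials are C-linearly independent at x. *)
Definition hol_family (n : nat) (Jm : nat -> nat -> R) (x : Point) (m : nat) : Prop :=
  exists (eps : R) (u v : nat -> Point -> R) (Du Dv : nat -> list nat -> Point -> R),
    eps > 0 /\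
    (forall l, (l < m)%nat ->
       holomorphic_on n Jm (ball (dimH n) x eps) (u l) (v l) (Du l) (Dv l)) /\
    (forall a b : nat -> R,
       (forall X : Point,
          sumR m (fun l => a l * dif (dimH n) (Du l) x X - b l * dif (dimH n) (Dv l) x X) = 0 /\
          sumR m (fun l => a l * dif (dimH n) (Dv l) x X + b l * dif (dimH n) (Du l) x X) = 0) ->
       forall l, (l < m)%nat -> a l = 0 /\ b l = 0).

Definition hol_type (n : nat) (Jm : nat -> nat -> R) (k : nat) : Prop :=
  forall x : Point,
    hol_family n Jm x k /\ (forall m, hol_family n Jm x m -> (m <= k)%nat).

(* Main.v *)
Require Import Defs.
From Stdlib Require Import Reals Lra Lia Arith List FunctionalExtensionality.
From Coquelicot Require Coquelicot.
Open Scope R_scope.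

Lemma sumR_ext M F G : (forall i, (i < M)%nat -> F i = G i) -> sumR M F = sumR M G.
Proof. induction M; simpl; intros H; auto. rewrite IHM by (intros; apply H; lia). rewrite H by lia; auto. Qed.

Lemma sumR_plus M F G : sumR M (fun i => F i + G i) = sumR M F + sumR M G.
Proof. induction M; simpl; [lra|]. rewrite IHM; lra. Qed.

Lemma sumR_scal M c F : sumR M (fun i => c * F i) = c * sumR M F.
Proof. induction M; simpl; [lra|]. rewrite IHM; lra. Qed.

Lemma sumR_scalr M c F : sumR M (fun i => F i * c) = sumR M F * c.
Proof. induction M; simpl; [lra|]. rewrite IHM; lra. Qed.

Lemma sumR_opp M F : sumR M (fun i => - F i) = - sumR M F.
Proof. induction M; simpl; [lra|]. rewrite IHM; lra. Qed.

Lemma sumR_zero M F : (forall i, (i < M)%nat -> F i = 0) -> sumR M F = 0.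
Proof. induction M; simpl; intros H; auto. rewrite IHM by (intros; apply H; lia). rewrite H by lia; lra. Qed.

Lemma sumR_exchange M K F :
  sumR M (fun i => sumR K (fun j => F i j)) = sumR K (fun j => sumR M (fun i => F i j)).
Proof.
  induction M; simpl.
  - symmetry; apply sumR_zero; auto.
  - rewrite IHM. rewrite <- sumR_plus. reflexivity.
Qed.

Lemma sumR_single M k F : (k < M)%nat -> (forall j, (j < M)%nat -> j <> k -> F j = 0) ->
  sumR M F = F k.
Proof.
  induction M; intros Hk H; [lia|]. simpl.
  destruct (Nat.eq_dec k M).
  - subst. rewrite sumR_zero; [lra|]. intros; apply H; lia.
  - rewrite IHM by (try lia; intros; apply H; lia). rewrite (H M) by lia. lra.
Qed.

Lemma sumR_split A B F : sumR (A + B) F = sumR A F + sumR B (fun i => F (A + i)%nat).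
Proof.
  induction B; simpl.
  - rewrite Nat.add_0_r; lra.
  - rewrite Nat.add_succ_r; simpl. rewrite IHB; lra.
Qed.

Lemma sumR_const M c : sumR M (fun _ => c) = INR M * c.
Proof. induction M; simpl; [lra|]. rewrite IHM. destruct M; simpl; lra. Qed.

Lemma sumR_nonneg_zero M F : (forall i, (i < M)%nat -> 0 <= F i) -> sumR M F = 0 ->
  forall i, (i < M)%nat -> F i = 0.
Proof.
  induction M; simpl; intros Hp Hs i Hi; [lia|].
  assert (0 <= sumR M F).
  { clear IHM Hs Hi i. induction M; simpl; [lra|]. assert (0 <= F M) by (apply Hp; lia).
    assert (0 <= sumR M F) by (apply IHM; intros; apply Hp; lia). lra. }
  assert (0 <= F M) by (apply Hp; lia).
  destruct (Nat.eq_dec i M). subst; lra.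
  apply IHM; try lra; try lia. intros; apply Hp; lia.
Qed.

Lemma in_q_iff n k : in_q n k = true <-> (n + 1 <= k /\ k < 2 * n + 1)%nat.
Proof. unfold in_q. rewrite Bool.andb_true_iff, Nat.leb_le, Nat.ltb_lt. tauto. Qed.

Lemma in_q_false n k : (k < n + 1)%nat \/ (2 * n + 1 <= k)%nat -> in_q n k = false.
Proof. intros H. destruct (in_q n k) eqn:E; auto. apply in_q_iff in E. lia. Qed.

Ltac nat_case := repeat match goal with
  | |- context [Nat.eqb ?a ?b] => let E := fresh "E" in destruct (Nat.eqb_spec a b) as [E|E]
  | H : context [Nat.eqb ?a ?b] |- _ => let E := fresh "E" in destruct (Nat.eqb_spec a b) as [E|E]
  end.

Lemma alpha_lin n j y M C W :
  alpha n j y (fun k => sumR M (fun m => C m * W m k)) = sumR M (fun m => C m * alpha n j y (W m)).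
Proof.
  unfold alpha. destruct (in_q n j).
  - transitivity (sumR M (fun m => C m * W m j + - (y (j - n - 1)%nat * (C m * W m n)))).
    + rewrite sumR_plus, sumR_opp, sumR_scal. lra.
    + apply sumR_ext; intros; lra.
  - reflexivity.
Qed.

Lemma alpha_Evec n j a y : alpha n j y (Evec n a y) = if Nat.eqb j a then 1 else 0.
Proof.
  unfold alpha, Evec.
  destruct (in_q n j) eqn:Hq.
  - assert (Hn : in_q n n = false) by (apply in_q_false; lia).
    rewrite Hn. apply in_q_iff in Hq.
    nat_case; simpl; subst; try lia; try lra.
  - nat_case; simpl; subst; try lia; try lra; try (rewrite Hq; simpl; lra); try (rewrite Bool.andb_false_r; lra).
Qed.

Definition Cof n (Jm : nat -> nat -> R) (y X : Point) (j : nat) := sumR (dimH n) (fun l => Jm j l * alpha n l y X).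

Lemma alpha_Japply n Jm y X j : (j < dimH n)%nat ->
  alpha n j y (Japply n Jm y X) = Cof n Jm y X j.
Proof.
  intros Hj. unfold Japply. rewrite alpha_lin.
  rewrite (sumR_single _ j). rewrite alpha_Evec, Nat.eqb_refl. unfold Cof; lra. auto.
  intros m Hm Hne. rewrite alpha_Evec. destruct (Nat.eqb_spec j m); [lia|lra].
Qed.

Lemma Evec_split n j y k : Evec n j y k =
  (if Nat.eqb j k then 1 else 0) + (if Nat.eqb j n then (if in_q n k then y (k - n - 1)%nat else 0) else 0).
Proof.
  unfold Evec. destruct (Nat.eqb_spec k j), (Nat.eqb_spec j k), (Nat.eqb_spec j n); try lia; simpl.
  - destruct (in_q n k) eqn:Hq; try lra. apply in_q_iff in Hq. lia.
  - lra.
  - destruct (in_q n k); lra.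
  - lra.
Qed.

Lemma Japply_formula n Jm y X k : (k < dimH n)%nat ->
  Japply n Jm y X k = Cof n Jm y X k + (if in_q n k then y (k - n - 1)%nat * Cof n Jm y X n else 0).
Proof.
  intros Hk. unfold Japply.
  transitivity (sumR (dimH n) (fun j => (if Nat.eqb j k then Cof n Jm y X j else 0) +
      (if Nat.eqb j n then (if in_q n k then y (k - n - 1)%nat * Cof n Jm y X n else 0) else 0))).
  - apply sumR_ext; intros j Hj. rewrite Evec_split. fold (Cof n Jm y X j).
    destruct (Nat.eqb_spec j k), (Nat.eqb_spec j n), (in_q n k) eqn:Hq; subst; try lra.
  - rewrite sumR_plus. rewrite (sumR_single _ k), (sumR_single _ n), !Nat.eqb_refl; try lra.
    + unfold dimH; lia.
    + intros; nat_case; try lia; lra.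
    + auto.
    + intros; nat_case; try lia; lra.
Qed.

Definition y0 : Point := fun _ => 0.

Lemma alpha_y0 n j X : alpha n j y0 X = X j.
Proof. unfold alpha, y0. destruct (in_q n j); lra. Qed.

Lemma Cof_y0 n Jm X j : Cof n Jm y0 X j = sumR (dimH n) (fun l => Jm j l * X l).
Proof. unfold Cof. apply sumR_ext; intros; rewrite alpha_y0; auto. Qed.

Lemma Japply_y0 n Jm X k : (k < dimH n)%nat -> Japply n Jm y0 X k = sumR (dimH n) (fun l => Jm k l * X l).
Proof. intros Hk. rewrite Japply_formula, Cof_y0 by auto. unfold y0. destruct (in_q n k); lra. Qed.

Lemma gmet_y0 n X Y : gmet n y0 X Y = sumR (dimH n) (fun j => X j * Y j).
Proof. unfold gmet. apply sumR_ext; intros; rewrite !alpha_y0; auto. Qed.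

Lemma sum_ecoord_r M a F : (a < M)%nat -> sumR M (fun l => F l * ecoord a l) = F a.
Proof.
  intros Ha. rewrite (sumR_single _ a); auto.
  2: intros j _ Hj; unfold ecoord; destruct (Nat.eqb_spec j a); [lia|lra].
  unfold ecoord; rewrite Nat.eqb_refl; lra.
Qed.

Lemma sum_ecoord_l M a F : (a < M)%nat -> sumR M (fun l => ecoord a l * F l) = F a.
Proof. intros Ha. rewrite <- (sum_ecoord_r M a F) by auto. apply sumR_ext; intros; lra. Qed.

Section JFacts.
Variable n : nat.
Variable Jm : nat -> nat -> R.
Hypothesis Hac : almost_complex n Jm.
Hypothesis Hcomp : compatible n Jm.

Lemma Jsq k l : (k < dimH n)%nat -> (l < dimH n)%nat ->
  sumR (dimH n) (fun m => Jm k m * Jm m l) = - (if Nat.eqb k l then 1 else 0).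
Proof.
  intros Hk Hl. pose proof (Hac y0 (ecoord l) k Hk) as H.
  rewrite Japply_y0 in H by auto. unfold ecoord at 2 in H. rewrite <- H.
  apply sumR_ext; intros m Hm. rewrite Japply_y0 by auto. rewrite sum_ecoord_r by auto. auto.
Qed.

Lemma Jcol a : (a < dimH n)%nat -> sumR (dimH n) (fun j => Jm j a * Jm j a) = 1.
Proof.
  intros Ha. pose proof (Hcomp y0 (ecoord a) (ecoord a)) as H.
  rewrite !gmet_y0 in H. rewrite sum_ecoord_l in H by auto.
  assert (E : ecoord a a = 1) by (unfold ecoord; rewrite Nat.eqb_refl; auto).
  rewrite E in H. rewrite <- H.
  apply sumR_ext; intros j Hj. rewrite Japply_y0 by auto. rewrite sum_ecoord_r by auto. auto.
Qed.

Lemma Janti a b : (a < dimH n)%nat -> (b < dimH n)%nat -> Jm a b = - Jm b a.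
Proof.
  intros Ha Hb. pose proof (Hcomp y0 (ecoord a) (Japply n Jm y0 (ecoord b))) as H.
  rewrite !gmet_y0 in H. rewrite sum_ecoord_l in H by auto.
  rewrite Japply_y0 in H by auto. rewrite sum_ecoord_r in H by auto.
  rewrite <- H.
  transitivity (sumR (dimH n) (fun j => Jm j a * - ecoord b j)).
  - apply sumR_ext; intros j Hj. rewrite (Hac y0 (ecoord b) j Hj). auto.
  rewrite Japply_y0, sum_ecoord_r by auto; auto.
  - transitivity (sumR (dimH n) (fun j => - (Jm j a * ecoord b j))).
    + apply sumR_ext; intros; lra.
    + rewrite sumR_opp. rewrite sum_ecoord_r by auto. auto.
Qed.

End JFacts.

Lemma dlim_affine c d x : derivable_pt_lim (fun t => c + t * d) x d.
Proof.
  unfold derivable_pt_lim; intros e He. exists (mkposreal 1 Rlt_0_1). intros h Hh _.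
  replace ((c + (x + h) * d - (c + x * d)) / h - d) with 0 by (field; auto).
  rewrite Rabs_R0; lra.
Qed.

Lemma alpha_local n j y y' X : (forall i, (i < n)%nat -> y i = y' i) -> alpha n j y X = alpha n j y' X.
Proof.
  intros H. unfold alpha. destruct (in_q n j) eqn:Hq; auto.
  apply in_q_iff in Hq. rewrite H by lia. auto.
Qed.

Lemma Evec_local n j y y' k : (forall i, (i < n)%nat -> y i = y' i) -> Evec n j y k = Evec n j y' k.
Proof.
  intros H. unfold Evec. destruct (in_q n k) eqn:Hq; rewrite ?Bool.andb_false_r, ?Bool.andb_true_r; auto.
  apply in_q_iff in Hq. rewrite H by lia. auto.
Qed.

Lemma Japply_local n Jm y y' X : (forall i, (i < n)%nat -> y i = y' i) -> Japply n Jm y X = Japply n Jm y' X.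
Proof.
  intros H. apply functional_extensionality; intros k. unfold Japply.
  apply sumR_ext; intros j _. rewrite (Evec_local n j y y' k) by auto. f_equal.
  apply sumR_ext; intros l _. rewrite (alpha_local n l y y') by auto. auto.
Qed.

Lemma Fcoord_local n Jm y y' a b : (forall i, (i < n)%nat -> y i = y' i) ->
  Fcoord n Jm y a b = Fcoord n Jm y' a b.
Proof.
  intros H. unfold Fcoord, gmet. rewrite (Japply_local n Jm y y') by auto.
  apply sumR_ext; intros j _. rewrite !(alpha_local n j y y') by auto. auto.
Qed.

Lemma Fcoord_p n Jm i b t : (i < n)%nat -> (n + 1 <= b)%nat -> (b < dimH n)%nat ->
  Fcoord n Jm (shift y0 i t) n b = Jm b n + t * (- Jm b (n + 1 + i)%nat).
Proof.
  intros Hi Hb1 Hb2. unfold Fcoord, gmet.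
  set (y := shift y0 i t).
  transitivity (sumR (dimH n) (fun j => alpha n j y (Japply n Jm y (ecoord n)) * ecoord b j)).
  - apply sumR_ext; intros j Hj. f_equal. unfold alpha.
    destruct (in_q n j); auto. unfold ecoord at 2. destruct (Nat.eqb_spec n b); [lia|]. lra.
  - rewrite sum_ecoord_r by auto. rewrite alpha_Japply by auto. unfold Cof.
    transitivity (sumR (dimH n) (fun l => Jm b l * ecoord n l +
        - (if Nat.eqb l (n + 1 + i) then t * Jm b (n + 1 + i)%nat else 0))).
    + apply sumR_ext; intros l Hl. unfold alpha, y, shift, y0.
      destruct (in_q n l) eqn:Hq.
      * apply in_q_iff in Hq. unfold ecoord at 2. destruct (Nat.eqb_spec n n); [|lia].
        destruct (Nat.eqb_spec (l - n - 1) i), (Nat.eqb_spec l (n + 1 + i)); try lia.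
        -- subst l. lra.
        -- lra.
      * destruct (Nat.eqb_spec l (n + 1 + i)).
        -- subst l. rewrite (proj2 (in_q_iff n (n + 1 + i))) in Hq by lia. discriminate.
        -- lra.
    + rewrite sumR_plus, sumR_opp, sum_ecoord_r by (unfold dimH; lia).
      rewrite (sumR_single _ (n + 1 + i)), Nat.eqb_refl. lra.
      unfold dimH; lia. intros j _ Hj. destruct (Nat.eqb_spec j (n + 1 + i)); [lia|lra].
Qed.

Lemma JZq n Jm (Hsym : symplectic n Jm) i b : (i < n)%nat -> (n + 1 <= b)%nat -> (b < dimH n)%nat ->
  Jm b (n + 1 + i)%nat = 0.
Proof.
  intros Hi Hb1 Hb2.
  assert (Ha1 : (i < dimH n)%nat) by (unfold dimH; lia).
  assert (Ha2 : (n < dimH n)%nat) by (unfold dimH; lia).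
  destruct (Hsym y0 i n b Ha1 Ha2 Hb2) as [L1 [L2 [L3 [H1 [H2 [H3 H4]]]]]].
  assert (E1 : (fun t => Fcoord n Jm (shift y0 i t) n b) = (fun t => Jm b n + t * (- Jm b (n + 1 + i)%nat))).
  { apply functional_extensionality; intros t. apply Fcoord_p; auto. }
  rewrite E1 in H1. pose proof (uniqueness_limite _ _ _ _ H1 (dlim_affine _ _ 0)) as U1.
  assert (E2 : (fun t => Fcoord n Jm (shift y0 n t) b i) = (fun t => Fcoord n Jm y0 b i)).
  { apply functional_extensionality; intros t. apply Fcoord_local. intros k Hk. unfold shift.
    destruct (Nat.eqb_spec k n); [lia|auto]. }
  rewrite E2 in H2. pose proof (uniqueness_limite _ _ _ _ H2 (derivable_pt_lim_const _ 0)) as U2.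
  assert (E3 : (fun t => Fcoord n Jm (shift y0 b t) i n) = (fun t => Fcoord n Jm y0 i n)).
  { apply functional_extensionality; intros t. apply Fcoord_local. intros k Hk. unfold shift.
    destruct (Nat.eqb_spec k b); [lia|auto]. }
  rewrite E3 in H3. pose proof (uniqueness_limite _ _ _ _ H3 (derivable_pt_lim_const _ 0)) as U3.
  lra.
Qed.

Section JZV.
Variable n : nat.
Variable Jm : nat -> nat -> R.
Hypothesis Hac : almost_complex n Jm.
Hypothesis Hcomp : compatible n Jm.
Hypothesis Hsym : symplectic n Jm.

Lemma JZ a b : (n + 1 <= a)%nat -> (a < dimH n)%nat -> (n + 1 <= b)%nat -> (b < dimH n)%nat ->
  Jm a b = 0.
Proof.
  intros Ha1 Ha2 Hb1 Hb2.
  destruct (Nat.lt_ge_cases b (2 * n + 1)).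
  - replace b with (n + 1 + (b - n - 1))%nat by lia. apply JZq; auto; lia.
  - destruct (Nat.lt_ge_cases a (2 * n + 1)).
    + rewrite (Janti n Jm Hac Hcomp) by auto.
      replace a with (n + 1 + (a - n - 1))%nat by lia. rewrite JZq; auto; try lra; lia.
    + assert (a = b) by (unfold dimH in *; lia). subst b.
      pose proof (Janti n Jm Hac Hcomp a a Ha2 Ha2). lra.
Qed.

Lemma JV a b : (a < n + 1)%nat -> (b < n + 1)%nat -> Jm a b = 0.
Proof.
  intros Ha Hb.
  assert (EN : dimH n = (n + 1 + (n + 1))%nat) by (unfold dimH; lia).
  assert (colV : forall a, (a < n + 1)%nat ->
    sumR (n + 1) (fun j => Jm j a * Jm j a) + sumR (n + 1) (fun j => Jm (n + 1 + j)%nat a * Jm (n + 1 + j)%nat a) = 1).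
  { intros c Hc. rewrite <- (Jcol n Jm Hcomp c) by (unfold dimH; lia). rewrite EN, (sumR_split (n + 1) (n + 1)). auto. }
  assert (colZ : forall a, (a < n + 1)%nat ->
    sumR (n + 1) (fun j => Jm j (n + 1 + a)%nat * Jm j (n + 1 + a)%nat) = 1).
  { intros c Hc. rewrite <- (Jcol n Jm Hcomp (n + 1 + c)) by (unfold dimH; lia). rewrite EN, (sumR_split (n + 1) (n + 1)).
    rewrite (sumR_zero (n + 1) (fun i => Jm (n + 1 + i)%nat (n + 1 + c)%nat * Jm (n + 1 + i)%nat (n + 1 + c)%nat)). lra.
    intros i Hi. rewrite JZ; try (unfold dimH; lia). lra. }
  assert (S2 : sumR (n + 1) (fun c => sumR (n + 1) (fun j => Jm (n + 1 + j)%nat c * Jm (n + 1 + j)%nat c)) = INR (n + 1)).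
  { transitivity (sumR (n + 1) (fun c => sumR (n + 1) (fun j => Jm c (n + 1 + j)%nat * Jm c (n + 1 + j)%nat))).
    - apply sumR_ext; intros c Hc; apply sumR_ext; intros j Hj.
      rewrite (Janti n Jm Hac Hcomp c) by (unfold dimH; lia). lra.
    - rewrite sumR_exchange. transitivity (sumR (n + 1) (fun _ => 1)).
      + apply sumR_ext; intros; apply colZ; auto.
      + rewrite sumR_const; lra. }
  assert (S1 : sumR (n + 1) (fun c => sumR (n + 1) (fun j => Jm j c * Jm j c)) = 0).
  { assert (sumR (n + 1) (fun c => sumR (n + 1) (fun j => Jm j c * Jm j c) +
       sumR (n + 1) (fun j => Jm (n + 1 + j)%nat c * Jm (n + 1 + j)%nat c)) = INR (n + 1)).
    { transitivity (sumR (n + 1) (fun _ => 1)). apply sumR_ext; intros; apply colV; auto.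
      rewrite sumR_const; lra. }
    rewrite sumR_plus, S2 in H. lra. }
  assert (nn : forall M F, sumR M (fun j => F j * F j) >= 0).
  { intros M F. induction M; simpl. lra. pose proof (Rle_0_sqr (F M)). unfold Rsqr in *. lra. }
  pose proof (sumR_nonneg_zero (n + 1) _ ltac:(intros; apply Rge_le, nn) S1 b Hb) as Hc.
  simpl in Hc.
  pose proof (sumR_nonneg_zero (n + 1) _ ltac:(intros; apply Rle_0_sqr) Hc a Ha) as Hd.
  cbv beta in Hd. apply Rmult_integral in Hd. destruct Hd; auto.
Qed.

End JZV.

Lemma der_along (g : Point -> R) (phi : R -> Point) t0 k L :
  (forall h, phi (t0 + h) = shift (phi t0) k h) ->
  derivable_pt_lim (fun h => g (shift (phi t0) k h)) 0 L ->
  derivable_pt_lim (fun t => g (phi t)) t0 L.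
Proof.
  intros Hphi H e He. destruct (H e He) as [d Hd]. exists d. intros h Hh Hh2.
  specialize (Hd h Hh Hh2). rewrite Hphi.
  replace (phi t0) with (shift (phi t0) k 0) at 2.
  2:{ rewrite <- Hphi. rewrite Rplus_0_r. auto. }
  rewrite Rplus_0_l in Hd. exact Hd.
Qed.

Module Schw.
Import Coquelicot.Coquelicot.

Lemma sym2 N (x : Point) eps f D a b : eps > 0 -> smooth_on N (Defs.ball N x eps) f D ->
  (a < N)%nat -> (b < N)%nat -> D (a :: b :: nil) x = D (b :: a :: nil) x.
Proof.
  intros Heps [H0 [Hd Hc]] Ha Hb.
  destruct (Nat.eq_dec a b) as [<-|Hab]; [reflexivity|].
  set (pt := fun z t => shift (shift x a z) b t).
  assert (inb : forall z t, Rabs z < eps -> Rabs t < eps -> Defs.ball N x eps (pt z t)).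
  { intros z t Hz Ht k Hk. unfold pt, shift.
    destruct (Nat.eqb_spec k b), (Nat.eqb_spec k a); subst; try lia.
    - replace (x b + t - x b) with t by ring. auto.
    - replace (x a + z - x a) with z by ring. auto.
    - replace (x k - x k) with 0 by ring. rewrite Rabs_R0. lra. }
  assert (ptb : forall z t h, pt z (t + h) = shift (pt z t) b h).
  { intros z t h. apply functional_extensionality; intros k. unfold pt, shift.
    destruct (Nat.eqb_spec k b); ring. }
  assert (pta : forall z t h, pt (z + h) t = shift (pt z t) a h).
  { intros z t h. apply functional_extensionality; intros k. unfold pt, shift.
    destruct (Nat.eqb_spec k b), (Nat.eqb_spec k a); subst; try lia; ring. }
  assert (pt00 : pt 0 0 = x).
  { apply functional_extensionality; intros k. unfold pt, shift.
    destruct (Nat.eqb_spec k b), (Nat.eqb_spec k a); ring. }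
  assert (db : forall l z t, Rabs z < eps -> Rabs t < eps ->
     derivable_pt_lim (fun t' => D l (pt z t')) t (D (b :: l) (pt z t))).
  { intros l z t Hz Ht. apply (der_along (D l) (fun t' => pt z t') t b); auto. }
  assert (da : forall l z t, Rabs z < eps -> Rabs t < eps ->
     derivable_pt_lim (fun z' => D l (pt z' t)) z (D (a :: l) (pt z t))).
  { intros l z t Hz Ht. apply (der_along (D l) (fun z' => pt z' t) z a); auto. }
  assert (loc : forall u (P : R -> Prop), Rabs u < eps -> (forall z, Rabs z < eps -> P z) -> locally u P).
  { intros u P Hu HP. assert (Hp : 0 < eps - Rabs u) by lra. exists (mkposreal _ Hp).
    intros y Hy. apply HP. change (Rabs (y - u) < eps - Rabs u) in Hy.
    assert (T := Rabs_triang (y - u) u). unfold Rminus in T.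
    rewrite Rplus_assoc, Rplus_opp_l, Rplus_0_r in T. unfold Rminus in Hy. lra. }
  set (f2 := fun z t => D nil (pt z t)).
  assert (Db : forall z t, Rabs z < eps -> Rabs t < eps -> Derive (fun t' => f2 z t') t = D (b :: nil) (pt z t)).
  { intros z t Hz Ht. apply is_derive_unique. apply is_derive_Reals. apply db; auto. }
  assert (Da : forall z t, Rabs z < eps -> Rabs t < eps -> Derive (fun z' => f2 z' t) z = D (a :: nil) (pt z t)).
  { intros z t Hz Ht. apply is_derive_unique. apply is_derive_Reals. apply da; auto. }
  assert (IDab : forall u v, Rabs u < eps -> Rabs v < eps ->
    is_derive (fun z : R => Derive (fun t : R => f2 z t) v) u (D (a :: b :: nil) (pt u v))).
  { intros u v Hu Hv. apply (is_derive_ext_loc (fun z => D (b :: nil) (pt z v))).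
    - apply loc; auto. intros z Hz. symmetry. apply Db; auto.
    - apply is_derive_Reals. apply da; auto. }
  assert (IDba : forall u v, Rabs u < eps -> Rabs v < eps ->
    is_derive (fun z : R => Derive (fun t : R => f2 t z) u) v (D (b :: a :: nil) (pt u v))).
  { intros u v Hu Hv. apply (is_derive_ext_loc (fun z => D (a :: nil) (pt u z))).
    - apply loc; auto. intros z Hz. symmetry. apply Da; auto.
    - apply is_derive_Reals. apply db; auto. }
  assert (E0 : Rabs 0 < eps) by (rewrite Rabs_R0; lra).
  pose proof (Schwarz f2 0 0) as S.
  rewrite (is_derive_unique _ _ _ (IDab 0 0 E0 E0)), (is_derive_unique _ _ _ (IDba 0 0 E0 E0)) in S.
  rewrite pt00 in S. apply S; clear S.
  - exists (mkposreal eps Heps). intros u v Hu Hv. simpl in Hu, Hv.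
    rewrite Rminus_0_r in Hu, Hv. repeat split.
    + exists (D (a :: nil) (pt u v)). apply is_derive_Reals. apply da; auto.
    + exists (D (b :: nil) (pt u v)). apply is_derive_Reals. apply db; auto.
    + eexists. apply IDab; auto.
    + eexists. apply IDba; auto.
  - intros e. assert (Hx : Defs.ball N x eps x).
    { intros k Hk. replace (x k - x k) with 0 by ring. rewrite Rabs_R0; lra. }
    destruct (Hc (a :: b :: nil) x Hx e (cond_pos e)) as [d [Hd0 Hdd]].
    assert (Hm : 0 < Rmin d eps) by (apply Rmin_glb_lt; lra).
    exists (mkposreal _ Hm). intros u v Hu Hv. simpl in Hu, Hv. rewrite Rminus_0_r in Hu, Hv.
    pose proof (Rmin_l d eps). pose proof (Rmin_r d eps).
    rewrite (is_derive_unique _ _ _ (IDab u v ltac:(lra) ltac:(lra))).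
    rewrite (is_derive_unique _ _ _ (IDab 0 0 E0 E0)), pt00.
    apply Hdd. apply inb; lra.
    intros k Hk. unfold pt, shift. destruct (Nat.eqb_spec k b), (Nat.eqb_spec k a); try subst k; try lia.
    + replace (x b + v - x b) with v by ring. lra.
    + replace (x a + u - x a) with u by ring. lra.
    + replace (x k - x k) with 0 by ring. rewrite Rabs_R0; lra.
  - intros e. assert (Hx : Defs.ball N x eps x).
    { intros k Hk. replace (x k - x k) with 0 by ring. rewrite Rabs_R0; lra. }
    destruct (Hc (b :: a :: nil) x Hx e (cond_pos e)) as [d [Hd0 Hdd]].
    assert (Hm : 0 < Rmin d eps) by (apply Rmin_glb_lt; lra).
    exists (mkposreal _ Hm). intros u v Hu Hv. simpl in Hu, Hv. rewrite Rminus_0_r in Hu, Hv.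
    pose proof (Rmin_l d eps). pose proof (Rmin_r d eps).
    rewrite (is_derive_unique _ _ _ (IDba u v ltac:(lra) ltac:(lra))).
    rewrite (is_derive_unique _ _ _ (IDba 0 0 E0 E0)), pt00.
    apply Hdd. apply inb; lra.
    intros k Hk. unfold pt, shift. destruct (Nat.eqb_spec k b), (Nat.eqb_spec k a); try subst k; try lia.
    + replace (x b + v - x b) with v by ring. lra.
    + replace (x a + u - x a) with u by ring. lra.
    + replace (x k - x k) with 0 by ring. rewrite Rabs_R0; lra.
Qed.
End Schw.

Definition Qd n (x : Point) m (W1 : nat -> R) (W2 : nat -> nat -> R) :=
  sumR (dimH n) (fun k => if in_q n k then ((if Nat.eqb (k - n - 1) m then 1 else 0) * W1 k + x (k - n - 1)%nat * W2 m k) else 0).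

Definition Qx n (x : Point) (W : nat -> R) :=
  sumR (dimH n) (fun k => if in_q n k then x (k - n - 1)%nat * W k else 0).

Lemma Qd_small n x i W1 W2 : (i < n)%nat ->
  Qd n x i W1 W2 = W1 (n + 1 + i)%nat + Qx n x (fun k => W2 i k).
Proof.
  intros Hi. unfold Qd, Qx.
  transitivity (sumR (dimH n) (fun k => (if Nat.eqb k (n + 1 + i) then W1 k else 0) +
     (if in_q n k then x (k - n - 1)%nat * W2 i k else 0))).
  - apply sumR_ext; intros k Hk. destruct (in_q n k) eqn:Hq.
    + apply in_q_iff in Hq. destruct (Nat.eqb_spec (k - n - 1) i), (Nat.eqb_spec k (n + 1 + i)); try lia; lra.
    + destruct (Nat.eqb_spec k (n + 1 + i)); try lra. subst k.
      rewrite (proj2 (in_q_iff n (n + 1 + i))) in Hq by lia. discriminate.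
  - rewrite sumR_plus. rewrite (sumR_single _ (n + 1 + i)), Nat.eqb_refl. auto.
    unfold dimH; lia. intros j _ Hj. destruct (Nat.eqb_spec j (n + 1 + i)); [lia|lra].
Qed.

Lemma Qd_big n x m W1 W2 : (n <= m)%nat -> Qd n x m W1 W2 = Qx n x (fun k => W2 m k).
Proof.
  intros Hm. unfold Qd, Qx. apply sumR_ext; intros k Hk. destruct (in_q n k) eqn:Hq; auto.
  apply in_q_iff in Hq. destruct (Nat.eqb_spec (k - n - 1) m); [lia|lra].
Qed.

Section Alg.
Variable n : nat.
Variable Jm : nat -> nat -> R.
Hypothesis HJV : forall a b, (a < n + 1)%nat -> (b < n + 1)%nat -> Jm a b = 0.
Variable x : Point.
Variables (U1 V1 : nat -> R) (U2 V2 : nat -> nat -> R).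
Let N := dimH n.
Hypothesis SU : forall m k, (m < N)%nat -> (k < N)%nat -> U2 m k = U2 k m.
Hypothesis SV : forall m k, (m < N)%nat -> (k < N)%nat -> V2 m k = V2 k m.
Hypothesis H1 : forall a m, (a < n)%nat -> (m < N)%nat -> sumR N (fun k => Jm k a * U2 m k) = - V2 m a.
Hypothesis H2 : forall a m, (a < n)%nat -> (m < N)%nat -> sumR N (fun k => Jm k a * V2 m k) = U2 m a.
Hypothesis H3 : forall m, (m < N)%nat -> sumR N (fun k => Jm k n * U2 m k) = - (V2 m n + Qd n x m V1 V2).
Hypothesis H4 : forall m, (m < N)%nat -> sumR N (fun k => Jm k n * V2 m k) = U2 m n + Qd n x m U1 U2.

Lemma alg_main i : (i < n)%nat -> V1 (n + 1 + i)%nat = 0.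
Proof.
  intros Hi.
  assert (HiN : (i < N)%nat) by (unfold N, dimH; lia).
  assert (HnN : (n < N)%nat) by (unfold N, dimH; lia).
  pose proof (H3 i HiN) as E3. rewrite Qd_small in E3 by auto.
  assert (T1 : sumR N (fun k => Jm k n * U2 i k) =
     sumR N (fun k => sumR N (fun k' => Jm k n * (Jm k' i * V2 k k')))).
  { apply sumR_ext; intros k Hk. rewrite sumR_scal. f_equal.
    rewrite SU by auto. symmetry. apply H2; auto. }
  assert (T2 : V2 i n = - sumR N (fun k' => Jm k' i * U2 n k')).
  { rewrite SV by auto. rewrite H1; auto. lra. }
  assert (T3 : Qx n x (fun k => V2 i k) =
     - sumR N (fun k' => Jm k' i * Qx n x (fun k => U2 k k'))).
  { unfold Qx. rewrite <- sumR_opp.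
    transitivity (sumR N (fun k => - sumR N (fun k' => if in_q n k then x (k - n - 1)%nat * (Jm k' i * U2 k k') else 0))).
    - apply sumR_ext; intros k Hk. destruct (in_q n k).
      + rewrite sumR_scal, H1 by auto. rewrite (SV i k) by auto. lra.
      + rewrite sumR_zero; auto; lra.
    -       transitivity (sumR N (fun k => sumR N (fun k' => - (if in_q n k then x (k - n - 1)%nat * (Jm k' i * U2 k k') else 0)))).
      + apply sumR_ext; intros; rewrite sumR_opp; auto.
      + rewrite sumR_exchange. apply sumR_ext; intros k' Hk'. rewrite <- sumR_scal, <- sumR_opp.
        apply sumR_ext; intros k Hk. destruct (in_q n k); lra. }
  assert (T4 : forall k', (k' < N)%nat ->
     Jm k' i * (U2 n k' + Qx n x (fun k => U2 k k')) = Jm k' i * sumR N (fun k => Jm k n * V2 k' k)).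
  { intros k' Hk'. destruct (Nat.lt_ge_cases k' (n + 1)).
    - rewrite HJV by lia. lra.
    - rewrite H4 by auto. rewrite Qd_big by lia. f_equal. rewrite SU by auto. f_equal.
      unfold Qx. apply sumR_ext; intros k Hk. rewrite SU by auto. auto. }
  assert (Fin : V1 (n + 1 + i)%nat =
     - sumR N (fun k => sumR N (fun k' => Jm k n * (Jm k' i * V2 k k'))) +
     sumR N (fun k' => Jm k' i * sumR N (fun k => Jm k n * V2 k' k))).
  { rewrite <- T1. rewrite <- (sumR_ext _ _ _ T4). unfold Qx.
    transitivity (- sumR N (fun k => Jm k n * U2 i k) - V2 i n - Qx n x (fun k => V2 i k)).
    - fold N in E3. lra.
    - rewrite T2, T3. unfold Qx.
      rewrite <- (sumR_opp N (fun k' => Jm k' i * U2 n k')).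
      transitivity (- sumR N (fun k => Jm k n * U2 i k) +
        (sumR N (fun k' => Jm k' i * U2 n k') + sumR N (fun k' => Jm k' i *
           sumR N (fun k => if in_q n k then x (k - n - 1)%nat * U2 k k' else 0)))).
      + rewrite sumR_opp. fold N. lra.
      + rewrite <- sumR_plus. f_equal. apply sumR_ext; intros. unfold N. ring. }
  rewrite Fin.
  assert (A : sumR N (fun k' => Jm k' i * sumR N (fun k => Jm k n * V2 k' k)) =
     sumR N (fun k' => sumR N (fun k => Jm k' i * (Jm k n * V2 k' k)))).
  { apply sumR_ext; intros; rewrite sumR_scal; auto. }
  rewrite A, (sumR_exchange N N (fun k' k => Jm k' i * (Jm k n * V2 k' k))).
  assert (B : sumR N (fun k => sumR N (fun k' => Jm k n * (Jm k' i * V2 k k'))) =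
          sumR N (fun k => sumR N (fun k' => Jm k' i * (Jm k n * V2 k' k)))).
  { apply sumR_ext; intros k Hk; apply sumR_ext; intros k' Hk'. rewrite (SV k' k) by auto. ring. }
  lra.
Qed.
End Alg.

Lemma shift0 x m : shift x m 0 = x.
Proof. apply functional_extensionality; intros k; unfold shift. destruct (Nat.eqb_spec k m); ring. Qed.

Lemma shift_ball N x eps m t : eps > 0 -> (m < N)%nat -> Rabs t < eps -> ball N x eps (shift x m t).
Proof.
  intros He Hm Ht k Hk. unfold shift. destruct (Nat.eqb_spec k m).
  - replace (x k + t - x k) with t by ring; auto.
  - replace (x k - x k) with 0 by ring. rewrite Rabs_R0; lra.
Qed.

Lemma ball_center N x eps : eps > 0 -> ball N x eps x.
Proof. intros He k Hk. replace (x k - x k) with 0 by ring. rewrite Rabs_R0; lra. Qed.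

Lemma diff_eq N x eps m (G1 G2 : Point -> R) L1 L2 : eps > 0 -> (m < N)%nat ->
  (forall y, ball N x eps y -> G1 y = G2 y) ->
  derivable_pt_lim (fun t => G1 (shift x m t)) 0 L1 ->
  derivable_pt_lim (fun t => G2 (shift x m t)) 0 L2 -> L1 = L2.
Proof.
  intros He Hm HG D1 D2. apply (uniqueness_limite (fun t => G2 (shift x m t)) 0); auto.
  intros e Hee. destruct (D1 e Hee) as [d Hd].
  assert (Hp : 0 < Rmin d eps) by (apply Rmin_glb_lt; [apply cond_pos|lra]).
  exists (mkposreal _ Hp). intros h Hh Hh2. simpl in Hh2.
  pose proof (Rmin_l d eps). pose proof (Rmin_r d eps).
  rewrite <- !HG. apply Hd; auto; lra.
  apply shift_ball; auto. rewrite Rabs_R0; lra.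
  apply shift_ball; auto. rewrite Rplus_0_l; lra.
Qed.

Lemma dsum M (F : nat -> R -> R) L :
  (forall k, (k < M)%nat -> derivable_pt_lim (F k) 0 (L k)) ->
  derivable_pt_lim (fun t => sumR M (fun k => F k t)) 0 (sumR M L).
Proof.
  induction M; intros H; simpl.
  - apply derivable_pt_lim_const.
  - apply (derivable_pt_lim_plus (fun t => sumR M (fun k => F k t)) (F M)).
    apply IHM; intros; apply H; lia. apply H; lia.
Qed.

Lemma dscal f c l : derivable_pt_lim f 0 l -> derivable_pt_lim (fun t => c * f t) 0 (c * l).
Proof. intros H. apply (derivable_pt_lim_scal f c 0 l H). Qed.

Lemma dopp f l : derivable_pt_lim f 0 l -> derivable_pt_lim (fun t => - f t) 0 (- l).
Proof. intros H. apply (derivable_pt_lim_opp f 0 l H). Qed.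

Lemma dplus f g l1 l2 : derivable_pt_lim f 0 l1 -> derivable_pt_lim g 0 l2 ->
  derivable_pt_lim (fun t => f t + g t) 0 (l1 + l2).
Proof. intros H1 H2. apply (derivable_pt_lim_plus f g 0 l1 l2 H1 H2). Qed.

Lemma dmult f g l1 l2 : derivable_pt_lim f 0 l1 -> derivable_pt_lim g 0 l2 ->
  derivable_pt_lim (fun t => f t * g t) 0 (l1 * g 0 + f 0 * l2).
Proof. intros H1 H2. apply (derivable_pt_lim_mult f g 0 l1 l2 H1 H2). Qed.

Lemma dcoord x m j : derivable_pt_lim (fun t => shift x m t j) 0 (if Nat.eqb j m then 1 else 0).
Proof.
  unfold shift. destruct (Nat.eqb_spec j m).
  - replace (fun t => x j + t) with (fun t => x j + t * 1) by (apply functional_extensionality; intros; ring).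
    apply dlim_affine.
  - apply derivable_pt_lim_const.
Qed.

Section Hol.
Variable n : nat.
Variable Jm : nat -> nat -> R.
Hypothesis HJV : forall a b, (a < n + 1)%nat -> (b < n + 1)%nat -> Jm a b = 0.

Lemma Japply_Evec y a k : (a < n + 1)%nat -> (k < dimH n)%nat -> Japply n Jm y (Evec n a y) k = Jm k a.
Proof.
  intros Ha Hk.
  assert (HC : forall j, Cof n Jm y (Evec n a y) j = Jm j a).
  { intros j. unfold Cof. rewrite (sumR_single _ a). rewrite alpha_Evec, Nat.eqb_refl. ring.
    unfold dimH; lia. intros l _ Hl. rewrite alpha_Evec. destruct (Nat.eqb_spec l a); [lia|ring]. }
  rewrite Japply_formula by auto. rewrite !HC. rewrite (HJV n a) by lia.
  destruct (in_q n k); ring.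
Qed.

Lemma Evec_sum_small y a F : (a < n)%nat -> sumR (dimH n) (fun k => Evec n a y k * F k) = F a.
Proof.
  intros Ha. rewrite (sumR_single _ a).
  - rewrite Evec_split, Nat.eqb_refl. destruct (Nat.eqb_spec a n); [lia|ring].
  - unfold dimH; lia.
  - intros j _ Hj. rewrite Evec_split. destruct (Nat.eqb_spec a j), (Nat.eqb_spec a n); try lia. ring.
Qed.

Lemma Evec_sum_n y F : sumR (dimH n) (fun k => Evec n n y k * F k) = F n + Qx n y F.
Proof.
  unfold Qx.
  transitivity (sumR (dimH n) (fun k => (if Nat.eqb k n then F k else 0) +
      (if in_q n k then y (k - n - 1)%nat * F k else 0))).
  - apply sumR_ext; intros k Hk. rewrite Evec_split, Nat.eqb_refl.
    destruct (Nat.eqb_spec n k), (Nat.eqb_spec k n); try lia.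
    + subst k. rewrite (in_q_false n n) by lia. ring.
    + destruct (in_q n k); ring.
  - rewrite sumR_plus. rewrite (sumR_single _ n), Nat.eqb_refl. auto.
    unfold dimH; lia. intros j _ Hj. destruct (Nat.eqb_spec j n); [lia|ring].
Qed.

Lemma Rrel U u v Du Dv y a : holomorphic_on n Jm U u v Du Dv -> U y -> (a < n + 1)%nat ->
  sumR (dimH n) (fun k => Jm k a * Du (k :: nil) y) = - sumR (dimH n) (fun k => Evec n a y k * Dv (k :: nil) y) /\
  sumR (dimH n) (fun k => Jm k a * Dv (k :: nil) y) = sumR (dimH n) (fun k => Evec n a y k * Du (k :: nil) y).
Proof.
  intros [_ [_ H]] Hy Ha. destruct (H y (Evec n a y) Hy) as [E1 E2]. unfold dif in E1, E2.
  split.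
  - rewrite <- E1. apply sumR_ext; intros k Hk. rewrite Japply_Evec by auto. auto.
  - rewrite <- E2. apply sumR_ext; intros k Hk. rewrite Japply_Evec by auto. auto.
Qed.

Lemma Qd_neg x m W1 W2 : Qd n x m (fun k => - W1 k) (fun m k => - W2 m k) = - Qd n x m W1 W2.
Proof. unfold Qd. rewrite <- sumR_opp. apply sumR_ext; intros k Hk. destruct (in_q n k); ring. Qed.

Lemma pair_q_zero x eps u v Du Dv : eps > 0 ->
  holomorphic_on n Jm (ball (dimH n) x eps) u v Du Dv ->
  forall i, (i < n)%nat -> Du ((n + 1 + i)%nat :: nil) x = 0 /\ Dv ((n + 1 + i)%nat :: nil) x = 0.
Proof.
  intros He Hh.
  pose proof Hh as [Su [Sv _]].
  pose proof Su as [_ [Du1 _]]. pose proof Sv as [_ [Dv1 _]].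
  set (N := dimH n).
  set (U1 := fun k => Du (k :: nil) x). set (V1 := fun k => Dv (k :: nil) x).
  set (U2 := fun m k => Du (m :: k :: nil) x). set (V2 := fun m k => Dv (m :: k :: nil) x).
  assert (Hx := ball_center N x eps He).
  assert (SU : forall m k, (m < N)%nat -> (k < N)%nat -> U2 m k = U2 k m).
  { intros m k Hm Hk. unfold U2. apply (Schw.sym2 N x eps u Du); auto. }
  assert (SV : forall m k, (m < N)%nat -> (k < N)%nat -> V2 m k = V2 k m).
  { intros m k Hm Hk. unfold V2. apply (Schw.sym2 N x eps v Dv); auto. }
  assert (dJ : forall (D : list nat -> Point -> R) a m, (m < N)%nat ->
     (forall k, (k < N)%nat -> derivable_pt_lim (fun t => D (k :: nil) (shift x m t)) 0 (D (m :: k :: nil) x)) ->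
     derivable_pt_lim (fun t => sumR N (fun k => Jm k a * D (k :: nil) (shift x m t))) 0
        (sumR N (fun k => Jm k a * D (m :: k :: nil) x))).
  { intros D a m Hm HD. apply (dsum N (fun k t => Jm k a * D (k :: nil) (shift x m t))).
    intros k Hk. apply dscal. apply HD; auto. }
  assert (dQ : forall (D : list nat -> Point -> R) m, (m < N)%nat ->
     (forall k, (k < N)%nat -> derivable_pt_lim (fun t => D (k :: nil) (shift x m t)) 0 (D (m :: k :: nil) x)) ->
     derivable_pt_lim (fun t => Qx n (shift x m t) (fun k => D (k :: nil) (shift x m t))) 0
        (Qd n x m (fun k => D (k :: nil) x) (fun m k => D (m :: k :: nil) x))).
  { intros D m Hm HD. unfold Qx, Qd.
    apply (dsum (dimH n) (fun k t => if in_q n k then shift x m t (k - n - 1)%nat * D (k :: nil) (shift x m t) else 0)).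
    intros k Hk. destruct (in_q n k).
    - pose proof (dmult _ _ _ _ (dcoord x m (k - n - 1)) (HD k Hk)) as HH.
      cbv beta in HH. rewrite !shift0 in HH. exact HH.
    - apply derivable_pt_lim_const. }
  assert (Du1' : forall m k, (m < N)%nat -> (k < N)%nat -> derivable_pt_lim (fun t => Du (k :: nil) (shift x m t)) 0 (Du (m :: k :: nil) x)).
  { intros m k Hm Hk. apply Du1; auto. }
  assert (Dv1' : forall m k, (m < N)%nat -> (k < N)%nat -> derivable_pt_lim (fun t => Dv (k :: nil) (shift x m t)) 0 (Dv (m :: k :: nil) x)).
  { intros m k Hm Hk. apply Dv1; auto. }
  assert (H1 : forall a m, (a < n)%nat -> (m < N)%nat -> sumR N (fun k => Jm k a * U2 m k) = - V2 m a).
  { intros a m Ha Hm.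
    apply (diff_eq N x eps m (fun y => sumR N (fun k => Jm k a * Du (k :: nil) y)) (fun y => - Dv (a :: nil) y)); [exact He | exact Hm | | |].
    - intros y Hy. destruct (Rrel _ u v Du Dv y a Hh Hy ltac:(lia)) as [E _]. unfold N; rewrite E.
      rewrite Evec_sum_small; auto.
    - cbv beta; unfold U1, V1, U2, V2. apply dJ; [exact Hm|]. intros; apply Du1'; auto.
    - cbv beta; unfold U1, V1, U2, V2. apply dopp. apply Dv1'; auto. unfold N, dimH; lia. }
  assert (H2 : forall a m, (a < n)%nat -> (m < N)%nat -> sumR N (fun k => Jm k a * V2 m k) = U2 m a).
  { intros a m Ha Hm.
    apply (diff_eq N x eps m (fun y => sumR N (fun k => Jm k a * Dv (k :: nil) y)) (fun y => Du (a :: nil) y)); [exact He | exact Hm | | |].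
    - intros y Hy. destruct (Rrel _ u v Du Dv y a Hh Hy ltac:(lia)) as [_ E]. unfold N; rewrite E.
      rewrite Evec_sum_small; auto.
    - cbv beta; unfold U1, V1, U2, V2. apply dJ; [exact Hm|]. intros; apply Dv1'; auto.
    - cbv beta; unfold U1, V1, U2, V2. apply Du1'; auto. unfold N, dimH; lia. }
  assert (H3 : forall m, (m < N)%nat -> sumR N (fun k => Jm k n * U2 m k) = - (V2 m n + Qd n x m V1 V2)).
  { intros m Hm.
    apply (diff_eq N x eps m (fun y => sumR N (fun k => Jm k n * Du (k :: nil) y))
       (fun y => - (Dv (n :: nil) y + Qx n y (fun k => Dv (k :: nil) y)))); [exact He | exact Hm | | |].
    - intros y Hy. destruct (Rrel _ u v Du Dv y n Hh Hy ltac:(lia)) as [E _]. unfold N; rewrite E.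
      rewrite Evec_sum_n; auto.
    - cbv beta; unfold U1, V1, U2, V2. apply dJ; [exact Hm|]. intros; apply Du1'; auto.
    - cbv beta; unfold U1, V1, U2, V2. apply dopp. apply dplus. apply Dv1'; auto. unfold N, dimH; lia.
      apply dQ; [exact Hm|]. intros; apply Dv1'; auto. }
  assert (H4 : forall m, (m < N)%nat -> sumR N (fun k => Jm k n * V2 m k) = U2 m n + Qd n x m U1 U2).
  { intros m Hm.
    apply (diff_eq N x eps m (fun y => sumR N (fun k => Jm k n * Dv (k :: nil) y))
       (fun y => Du (n :: nil) y + Qx n y (fun k => Du (k :: nil) y))); [exact He | exact Hm | | |].
    - intros y Hy. destruct (Rrel _ u v Du Dv y n Hh Hy ltac:(lia)) as [_ E]. unfold N; rewrite E.
      rewrite Evec_sum_n; auto.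
    - cbv beta; unfold U1, V1, U2, V2. apply dJ; [exact Hm|]. intros; apply Dv1'; auto.
    - cbv beta; unfold U1, V1, U2, V2. apply dplus. apply Du1'; auto. unfold N, dimH; lia.
      apply dQ; [exact Hm|]. intros; apply Du1'; auto. }
  intros i Hi. split.
  - assert (A := alg_main n Jm HJV x V1 (fun k => - U1 k) V2 (fun m k => - U2 m k)).
    assert (R : - U1 (n + 1 + i)%nat = 0).
    { apply A; auto.
      - intros m k Hm Hk. rewrite SU by auto. auto.
      - intros a m Ha Hm. rewrite H2 by auto. ring.
      - intros a m Ha Hm. change (dimH n) with N.
        transitivity (- sumR N (fun k => Jm k a * U2 m k)).
        { rewrite <- sumR_opp. apply sumR_ext; intros; ring. }
        rewrite H1 by auto. ring.
      - intros m Hm. rewrite Qd_neg. change (dimH n) with N. rewrite H4 by auto. ring.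
      - intros m Hm. change (dimH n) with N.
        transitivity (- sumR N (fun k => Jm k n * U2 m k)).
        { rewrite <- sumR_opp. apply sumR_ext; intros; ring. }
        rewrite H3 by auto. ring. }
    unfold U1 in R. lra.
  - apply (alg_main n Jm HJV x U1 V1 U2 V2); auto.
Qed.

End Hol.

Definition lin N (c : nat -> R) (y : Point) := sumR N (fun k => c k * y k).
Definition Dlin N (c : nat -> R) (l : list nat) (y : Point) : R :=
  match l with nil => lin N c y | k :: nil => c k | _ => 0 end.

Lemma sum_abs_bound M (c w : nat -> R) d : (forall k, (k < M)%nat -> Rabs (w k) <= d) ->
  Rabs (sumR M (fun k => c k * w k)) <= sumR M (fun k => Rabs (c k)) * d.
Proof.
  induction M; intros H; simpl.
  - rewrite Rabs_R0; lra.
  - eapply Rle_trans. apply Rabs_triang. rewrite Rmult_plus_distr_r.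
    apply Rplus_le_compat. apply IHM; intros; apply H; lia.
    rewrite Rabs_mult. apply Rmult_le_compat_l. apply Rabs_pos. apply H; lia.
Qed.

Lemma sum_abs_nonneg M (c : nat -> R) : 0 <= sumR M (fun k => Rabs (c k)).
Proof. induction M; simpl. lra. pose proof (Rabs_pos (c M)); lra. Qed.

Lemma lin_shift N c y k t : (k < N)%nat -> lin N c (shift y k t) = lin N c y + t * c k.
Proof.
  intros Hk. unfold lin, shift.
  transitivity (sumR N (fun j => c j * y j + (if Nat.eqb j k then t * c k else 0))).
  - apply sumR_ext; intros j Hj. destruct (Nat.eqb_spec j k). subst; ring. ring.
  - rewrite sumR_plus, (sumR_single _ k (fun j => if Nat.eqb j k then t * c k else 0)), Nat.eqb_refl. auto. auto.
    intros j _ Hj. destruct (Nat.eqb_spec j k); [lia|auto].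
Qed.

Lemma lin_smooth N U c : smooth_on N U (lin N c) (Dlin N c).
Proof.
  split; [|split].
  - intros; reflexivity.
  - intros l y k Hy Hk. destruct l as [|j [|j' l]]; simpl.
    + replace (fun t => lin N c (shift y k t)) with (fun t => lin N c y + t * c k).
      apply dlim_affine. apply functional_extensionality; intros t. rewrite lin_shift; auto.
    + apply derivable_pt_lim_const.
    + apply derivable_pt_lim_const.
  - intros l y Hy e He. destruct l as [|j [|j' l]]; simpl.
    + set (S := sumR N (fun k => Rabs (c k))). pose proof (sum_abs_nonneg N c).
      exists (e / (S + 1)). split. apply Rdiv_lt_0_compat; fold S in H; lra.
      intros z _ Hz. unfold lin.
      replace (sumR N (fun k => c k * z k) - sumR N (fun k => c k * y k)) with
        (sumR N (fun k => c k * (z k - y k))).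
      2:{ unfold Rminus. rewrite <- (sumR_opp N), <- sumR_plus. apply sumR_ext; intros; ring. }
      eapply Rle_lt_trans. apply sum_abs_bound with (d := e / (S + 1)).
      intros k Hk. left. apply Hz; auto. fold S.
      apply Rlt_le_trans with ((S + 1) * (e / (S + 1))).
      * fold S in H. assert (0 < e / (S + 1)) by (apply Rdiv_lt_0_compat; lra).
        rewrite Rmult_plus_distr_r. lra.
      * right. field. fold S in H; lra.
    + exists 1. split; [lra|]. intros. replace (c j - c j) with 0 by ring. rewrite Rabs_R0; lra.
    + exists 1. split; [lra|]. intros. replace (0 - 0) with 0 by ring. rewrite Rabs_R0; lra.
Qed.

Section Main.
Variable n : nat.
Variable Jm : nat -> nat -> R.
Hypothesis Hac : almost_complex n Jm.
Hypothesis Hcomp : compatible n Jm.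
Hypothesis Hsym : symplectic n Jm.

Let s := (2 * n + 1)%nat.
Let N := dimH n.
Lemma sN : (s < N)%nat. Proof. unfold s, N, dimH; lia. Qed.
Let HJV := JV n Jm Hac Hcomp Hsym.
Let HJZ := JZ n Jm Hac Hcomp Hsym.

Lemma Jsz k : (n + 1 <= k)%nat -> (k < N)%nat -> Jm s k = 0.
Proof. intros. apply HJZ; unfold s, N, dimH in *; lia. Qed.

Lemma in_q_s : in_q n s = false.
Proof. apply in_q_false. unfold s; lia. Qed.

Lemma alpha_s y X : alpha n s y X = X s.
Proof. unfold alpha. rewrite in_q_s. auto. Qed.

Lemma exist_hol x : hol_family n Jm x 1.
Proof.
  set (cu := ecoord s). set (cv := fun k => - Jm s k).
  exists 1, (fun _ => lin N cu), (fun _ => lin N cv), (fun _ => Dlin N cu), (fun _ => Dlin N cv).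
  split; [lra|split].
  - intros l Hl. split; [apply lin_smooth|split; [apply lin_smooth|]].
    intros y X _. unfold dif. simpl. fold N. split.
    + unfold cu. rewrite sum_ecoord_r by apply sN.
      rewrite Japply_formula by apply sN. rewrite in_q_s. unfold Cof. fold N.
      unfold cv. rewrite Rplus_0_r, <- sumR_opp. apply sumR_ext; intros j Hj'.
      unfold alpha. destruct (in_q n j) eqn:Hq.
      * apply in_q_iff in Hq. rewrite Jsz by lia. ring.
      * ring.
    + unfold cu. rewrite sum_ecoord_r by apply sN.
      transitivity (- sumR N (fun k => Cof n Jm y X k * Jm s k)).
      * rewrite <- sumR_opp. apply sumR_ext; intros k Hk. unfold cv.
        rewrite Japply_formula by auto. destruct (in_q n k) eqn:Hq.
        -- apply in_q_iff in Hq. rewrite Jsz by lia. ring.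
        -- ring.
      * unfold Cof. fold N.
        transitivity (- sumR N (fun j => sumR N (fun k => Jm s k * Jm k j) * alpha n j y X)).
        -- f_equal.
           transitivity (sumR N (fun k => sumR N (fun j => Jm s k * Jm k j * alpha n j y X))).
           { apply sumR_ext; intros k Hk. rewrite <- sumR_scalr. apply sumR_ext; intros; ring. }
           rewrite sumR_exchange. apply sumR_ext; intros j Hj'. rewrite <- sumR_scalr. apply sumR_ext; intros; ring.
        -- transitivity (- sumR N (fun j => - (if Nat.eqb s j then alpha n j y X else 0))).
           { f_equal. apply sumR_ext; intros j Hj. unfold N; rewrite Jsq by (auto; apply sN).
             destruct (Nat.eqb s j); ring. }
           rewrite sumR_opp, (sumR_single _ s), Nat.eqb_refl, alpha_s. ring. apply sN.
           intros j _ Hj. destruct (Nat.eqb_spec s j); [lia|ring].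
  - intros a b H l Hl. assert (l = 0%nat) by lia. subst l.
    destruct (H (ecoord s)) as [E1 E2]. simpl in E1, E2. unfold dif in E1, E2. simpl in E1, E2.
    fold N in E1, E2.
    rewrite !sum_ecoord_l in E1, E2 by apply sN. unfold cu, cv, ecoord in E1, E2.
    rewrite !Nat.eqb_refl in E1, E2. rewrite (HJZ s s) in E1, E2 by (unfold s, dimH; lia).
    split; lra.
Qed.


Lemma SJ k (W : nat -> R) : (k < n + 1)%nat -> (forall i, (i < n)%nat -> W (n + 1 + i)%nat = 0) ->
  sumR N (fun j => Jm j k * W j) = Jm s k * W s.
Proof.
  intros Hk HW. apply (sumR_single N s (fun j => Jm j k * W j)). apply sN.
  intros j Hj Hjs. destruct (Nat.lt_ge_cases j (n + 1)).
  - rewrite HJV by lia. ring.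
  - replace j with (n + 1 + (j - n - 1))%nat by lia. rewrite HW. ring.
    unfold s, N, dimH in *; lia.
Qed.

Lemma df_form x eps u v Du Dv : eps > 0 ->
  holomorphic_on n Jm (ball N x eps) u v Du Dv ->
  forall X, dif N Du x X = Dv (s :: nil) x * sumR N (fun k => X k * Jm s k) + Du (s :: nil) x * X s /\
            dif N Dv x X = - Du (s :: nil) x * sumR N (fun k => X k * Jm s k) + Dv (s :: nil) x * X s.
Proof.
  intros He Hh.
  pose proof (pair_q_zero n Jm HJV x eps u v Du Dv He Hh) as Q.
  assert (Hx := ball_center N x eps He).
  set (p := Du (s :: nil) x). set (q := Dv (s :: nil) x).
  assert (QU : forall i, (i < n)%nat -> Du ((n + 1 + i)%nat :: nil) x = 0) by (intros; apply Q; auto).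
  assert (QV : forall i, (i < n)%nat -> Dv ((n + 1 + i)%nat :: nil) x = 0) by (intros; apply Q; auto).
  assert (QxU : Qx n x (fun k => Du (k :: nil) x) = 0).
  { unfold Qx. apply sumR_zero; intros k Hk. destruct (in_q n k) eqn:Hq; auto.
    apply in_q_iff in Hq. replace k with (n + 1 + (k - n - 1))%nat by lia. rewrite QU by lia. ring. }
  assert (QxV : Qx n x (fun k => Dv (k :: nil) x) = 0).
  { unfold Qx. apply sumR_zero; intros k Hk. destruct (in_q n k) eqn:Hq; auto.
    apply in_q_iff in Hq. replace k with (n + 1 + (k - n - 1))%nat by lia. rewrite QV by lia. ring. }
  assert (PW : forall k, (k < N)%nat ->
     Du (k :: nil) x = q * Jm s k + p * ecoord s k /\ Dv (k :: nil) x = - p * Jm s k + q * ecoord s k).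
  { intros k Hk. unfold ecoord.
    destruct (Nat.lt_ge_cases k (n + 1)) as [Hk1|Hk1].
    - destruct (Nat.eqb_spec k s); [unfold s in *; lia|].
      destruct (Rrel n Jm HJV _ u v Du Dv x k Hh Hx Hk1) as [E1 E2].
      fold N in E1, E2.
      rewrite (SJ k (fun j => Du (j :: nil) x)) in E1 by auto.
      rewrite (SJ k (fun j => Dv (j :: nil) x)) in E2 by auto.
      destruct (Nat.eq_dec k n).
      + subst k. unfold N in E1, E2. rewrite Evec_sum_n in E1, E2. rewrite QxU in E2. rewrite QxV in E1.
        unfold p, q. split; lra.
      + unfold N in E1, E2. rewrite Evec_sum_small in E1, E2 by lia. unfold p, q. split; lra.
    - destruct (Nat.eqb_spec k s).
      + subst k. fold p q. rewrite (HJZ s s) by (unfold s, N, dimH in *; lia). split; ring.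
      + assert (k < 2 * n + 1)%nat by (unfold s, N, dimH in *; lia).
        rewrite Jsz by lia. replace k with (n + 1 + (k - n - 1))%nat by lia.
        rewrite QU, QV by lia. split; ring. }
  intros X. unfold dif. split.
  - transitivity (sumR N (fun k => q * (X k * Jm s k) + p * (X k * ecoord s k))).
    + apply sumR_ext; intros k Hk. rewrite (proj1 (PW k Hk)). ring.
    + rewrite sumR_plus, !sumR_scal, sum_ecoord_r by apply sN. auto.
  - transitivity (sumR N (fun k => - p * (X k * Jm s k) + q * (X k * ecoord s k))).
    + apply sumR_ext; intros k Hk. rewrite (proj2 (PW k Hk)). ring.
    + rewrite sumR_plus, !sumR_scal, sum_ecoord_r by apply sN. auto.
Qed.

Lemma sum_two M (F : nat -> R) : (2 <= M)%nat -> (forall l, (2 <= l)%nat -> (l < M)%nat -> F l = 0) ->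
  sumR M F = F 0%nat + F 1%nat.
Proof.
  induction M; intros HM H; [lia|].
  destruct (Nat.eq_dec M 1).
  - subst. simpl. ring.
  - simpl. rewrite IHM by (try lia; intros; apply H; lia). rewrite (H M) by lia. ring.
Qed.

Lemma upper_bound x m : hol_family n Jm x m -> (m <= 1)%nat.
Proof.
  intros [eps [u [v [Du [Dv [He [Hh Hind]]]]]]].
  destruct (Nat.le_gt_cases m 1) as [|Hm]; auto. exfalso.
  pose proof (df_form x eps (u 0%nat) (v 0%nat) (Du 0%nat) (Dv 0%nat) He (Hh 0%nat ltac:(lia))) as F0.
  pose proof (df_form x eps (u 1%nat) (v 1%nat) (Du 1%nat) (Dv 1%nat) He (Hh 1%nat ltac:(lia))) as F1.
  set (p0 := Du 0%nat (s :: nil) x) in *. set (q0 := Dv 0%nat (s :: nil) x) in *.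
  set (p1 := Du 1%nat (s :: nil) x) in *. set (q1 := Dv 1%nat (s :: nil) x) in *.
  destruct (Req_dec p0 0) as [Hp0|Hp0]; destruct (Req_dec q0 0) as [Hq0|Hq0].
  1: {
    pose proof (Hind (fun l => if Nat.eqb l 0 then 1 else 0) (fun _ => 0)) as HI.
    assert (C : (if Nat.eqb 0 0 then 1 else 0) = 0).
    { apply (HI); [|lia]. intros X. destruct (F0 X) as [A B].
      rewrite !(sum_two m) by (try lia; intros l Hl1 Hl2; destruct (Nat.eqb_spec l 0); try lia; ring).
      simpl. change (dimH n) with N. rewrite A, B, Hp0, Hq0. split; ring. }
    simpl in C. lra. }
  all: pose proof (Hind (fun l => if Nat.eqb l 0 then p1 else if Nat.eqb l 1 then - p0 else 0)
                        (fun l => if Nat.eqb l 0 then q1 else if Nat.eqb l 1 then - q0 else 0)) as HI.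
  all: assert (C : forall l, (l < m)%nat ->
        (if Nat.eqb l 0 then p1 else if Nat.eqb l 1 then - p0 else 0) = 0 /\
        (if Nat.eqb l 0 then q1 else if Nat.eqb l 1 then - q0 else 0) = 0).
  all: try (apply HI; intros X; destruct (F0 X) as [A0 B0]; destruct (F1 X) as [A1 B1];
      rewrite !(sum_two m) by (try lia; intros l Hl1 Hl2; destruct (Nat.eqb_spec l 0), (Nat.eqb_spec l 1); try lia; ring);
      simpl; change (dimH n) with N; rewrite A0, B0, A1, B1; split; ring).
  all: destruct (C 1%nat ltac:(lia)) as [C1 C2]; simpl in C1, C2; lra.
Qed.

End Main.

Theorem theorem3p1 (n : nat) (Jm : nat -> nat -> R) :
  (1 <= n)%nat ->
  almost_complex n Jm ->
  compatible n Jm ->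
  symplectic n Jm ->
  hol_type n Jm 1.
Proof.
  intros Hn Hac Hcomp Hsym x. split.
  - apply exist_hol; auto.
  - intros m Hm. apply (upper_bound n Jm Hac Hcomp Hsym x m Hm).
Qed.
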